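(* Let $S$ be a memory system satisfying the Causality assumption. For all $n,m,v\ge1$: every unambiguous trace of $S(n,m,v)$ is sequentially consistent if and only if there is a witness $\Omega$ for $S(n,m,v)$ such that the graph $G(\Omega)(\tau)$ is acyclic for every unambiguous trace $\tau$ of $S(n,m,v)$.
   Context: Notation: $\mathbb{N}_n=\{1,\dots,n\}$, $\mathbb{W}_n=\{0,\dots,n\}$. Memory events $E(n,m,v)=\{R,W\}\times\mathbb{N}_n\times\mathbb{N}_m\times\mathbb{W}_v$; for $e=\langle a,b,c,d\rangle$, $op(e)=a$, $proc(e)=b$, $loc(e)=c$, $data(e)=d$; $0$ models the initial value of every location. A memory system is a family $S=(S(n,m,v))_{n,m,v\ge1}$, $S(n,m,v)$ a regular set of finite runs over an alphabet $E^a(n,m,v)\supseteq E(n,m,v)$ (other letters are internal events). The trace of a run is its subsequence of memory events; traces of $S(n,m,v)$ are traces of its runs. For a sequence $\tau$ of memory events with positions $1,\dots,|\tau|$: $P(\tau,i)=\{k: proc(\tau(k))=i\}$, $L(\tau,j)=\{k: loc(\tau(k))=j\}$, $L^w(\tau,j)=\{k\in L(\tau,j): op(\tau(k))=W\}$, $L^r(\tau,j)=\{k\in L(\tau,j): op(\tau(k))=R\}$. A trace $\tau$ is unambiguous if for every location $j$ and $x\in L^w(\tau,j)$, $data(\tau(x))\ne0$ and $data(\tau(x))\ne data(\tau(y))$ for all $y\in L^w(\tau,j)\setminus\{x\}$. Causality assumption: for all $n,m,v\ge1$, every trace $\tau$ of $S(n,m,v)$, every location $j$ and every $x\in L^r(\tau,j)$,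 either $data(\tau(x))=0$ or there is $y\in L^w(\tau,j)$ with $data(\tau(x))=data(\tau(y))$. Sequential consistency: $\tau$ is serial if for every position $u$, with $upto(\tau,u)=\{k\le u: op(\tau(k))=W,\ loc(\tau(k))=loc(\tau(u))\}$, $data(\tau(u))=0$ when $upto(\tau,u)=\emptyset$ and $data(\tau(u))=data(\tau(\max upto(\tau,u)))$ otherwise. $M(\tau,i)=\{\langle u,v\rangle: u,v\in P(\tau,i), u<v\}$. $\tau$ is sequentially consistent if some permutation $f$ of $\mathbb{N}_{|\tau|}$ satisfies (C1) $\langle u,v\rangle\in M(\tau,i)$ for some $i$ implies $f(u)<f(v)$, and (C2) $\tau_{f^{-1}(1)}\cdots\tau_{f^{-1}(|\tau|)}$ is serial. A witness $\Omega$ for $S(n,m,v)$ assigns to every trace $\tau$ of $S(n,m,v)$ and location $j$ a strict total order $\Omega(\tau,j)$ on $L^w(\tau,j)$. For unambiguous $\tau$, $\Omega^e(\tau,j)\subseteq L(\tau,j)^2$: $\langle x,y\rangle\in\Omega^e(\tau,j)$ iff (1) $data(\tau(x))=data(\tau(y))$, $op(\tau(x))=W$, $op(\tau(y))=R$; or (2) $data(\tau(x))=0$ and $data(\tau(y))\ne0$; or (3) there are $a,b\in L^w(\tau,j)$ with $\langle a,b\rangle\in\Omega(\tau,j)$, $data(\tau(a))=data(\tau(x))$, $data(\tau(b))=data(\tau(y))$. The constraint graph $G(\Omega)(\tau)$ is the directed graph with vertex set $\{1,\dots,|\tau|\}$ and edge set $\bigcup_{1\le i\le n}M(\tau,i)\cup\bigcup_{1\le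 j\le m}\Omega^e(\tau,j)$. *)

(* Defs.v *)
From Stdlib Require Import Relations.
From Stdlib Require List.
From mathcomp Require Import all_boot.
Set Implicit Arguments. Unset Strict Implicit. Unset Printing Implicit Defensive.

Inductive opk := R | W.

Record event := Ev { op : opk; proc : nat; loc : nat; data : nat }.

Definition is_write (e : event) : bool := if op e is W then true else false.

Definition in_E (n m v : nat) (e : event) : Prop :=
  1 <= proc e <= n /\ 1 <= loc e <= m /\ data e <= v.

Definition regular_lang (A : Type) (L : seq A -> Prop) : Prop :=
  exists (Q : finType) (q0 : Q) (d : Q -> A -> Q) (F : pred Q),
    forall w, L w <-> F (foldl d q0 w).

(* A memory system: for each n,m,v a finite set of internal letters
   (so E^a(n,m,v) = E(n,m,v) + internal letters), and a regular set of runs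
   over E^a(n,m,v). *)
Record memsys := MemSys {
  internal : nat -> nat -> nat -> finType;
  runs : forall n m v, seq (event + internal n m v) -> Prop;
  runs_events : forall n m v (r : seq (event + internal n m v)),
      runs r -> forall e, List.In (inl e) r -> in_E n m v e;
  runs_regular : forall n m v, regular_lang (@runs n m v)
}.

Definition trace (I : Type) (r : seq (event + I)) : seq event :=
  pmap (fun a => if a is inl e then Some e else None) r.

Definition trace_of (S : memsys) (n m v : nat) (tau : seq event) : Prop :=
  exists r, @runs S n m v r /\ trace r = tau.

Definition dflt_ev := Ev R 0 0 0.
Definition at_ (tau : seq event) (k : nat) : event := nth dflt_ev tau k.-1.
Definition pos (tau : seq event) (k : nat) : Prop := 1 <= k <= size tau.

Definition Pset (tau : seq event) (i k : nat) : Prop := pos tau k /\ proc (at_ tau k) = i.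
Definition Lset (tau : seq event) (j k : nat) : Prop := pos tau k /\ loc (at_ tau k) = j.
Definition Lw (tau : seq event) (j k : nat) : Prop := Lset tau j k /\ op (at_ tau k) = W.
Definition Lr (tau : seq event) (j k : nat) : Prop := Lset tau j k /\ op (at_ tau k) = R.

Definition unambiguous (tau : seq event) : Prop :=
  forall j x, Lw tau j x ->
    data (at_ tau x) <> 0 /\
    (forall y, Lw tau j y -> y <> x -> data (at_ tau x) <> data (at_ tau y)).

Definition causality (S : memsys) : Prop :=
  forall n m v, 1 <= n -> 1 <= m -> 1 <= v ->
  forall tau, trace_of S n m v tau ->
  forall j x, Lr tau j x ->
    data (at_ tau x) = 0 \/ exists y, Lw tau j y /\ data (at_ tau x) = data (at_ tau y).

Definition upto (tau : seq event) (u : nat) : seq nat :=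
  [seq k <- iota 1 u | is_write (at_ tau k) && (loc (at_ tau k) == loc (at_ tau u))].

Definition serial (tau : seq event) : Prop :=
  forall u, pos tau u ->
    data (at_ tau u) =
      (if upto tau u is [::] then 0 else data (at_ tau (\max_(k <- upto tau u) k))).

Definition Mrel (tau : seq event) (i u w : nat) : Prop :=
  Pset tau i u /\ Pset tau i w /\ u < w.

Definition perm_N (N : nat) (f g : nat -> nat) : Prop :=
  (forall u, 1 <= u <= N -> 1 <= f u <= N /\ g (f u) = u) /\
  (forall p, 1 <= p <= N -> 1 <= g p <= N /\ f (g p) = p).

Definition seq_consistent (tau : seq event) : Prop :=
  exists f g : nat -> nat, perm_N (size tau) f g /\
    (forall i u w, Mrel tau i u w -> f u < f w) /\
    serial [seq at_ tau (g p) | p <- iota 1 (size tau)].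

Definition strict_total_order (D : nat -> Prop) (Rl : nat -> nat -> Prop) : Prop :=
  (forall x y, Rl x y -> D x /\ D y) /\
  (forall x, ~ Rl x x) /\
  (forall x y z, Rl x y -> Rl y z -> Rl x z) /\
  (forall x y, D x -> D y -> x <> y -> Rl x y \/ Rl y x).

Definition witness (S : memsys) (n m v : nat)
  (Omega : seq event -> nat -> nat -> nat -> Prop) : Prop :=
  forall tau, trace_of S n m v tau ->
  forall j, 1 <= j <= m -> strict_total_order (Lw tau j) (Omega tau j).

Definition Omega_e (tau : seq event) (Om : nat -> nat -> Prop) (j x y : nat) : Prop :=
  Lset tau j x /\ Lset tau j y /\
  ( (data (at_ tau x) = data (at_ tau y) /\ op (at_ tau x) = W /\ op (at_ tau y) = R)
  \/ (data (at_ tau x) = 0 /\ data (at_ tau y) <> 0)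
  \/ (exists a b, Lw tau j a /\ Lw tau j b /\ Om a b /\
        data (at_ tau a) = data (at_ tau x) /\ data (at_ tau b) = data (at_ tau y)) ).

Definition Gedge (n m : nat) (Omega : seq event -> nat -> nat -> nat -> Prop)
  (tau : seq event) (x y : nat) : Prop :=
  pos tau x /\ pos tau y /\
  ((exists i, 1 <= i <= n /\ Mrel tau i x y) \/
   (exists j, 1 <= j <= m /\ Omega_e tau (Omega tau j) j x y)).

Definition acyclic (E : nat -> nat -> Prop) : Prop :=
  forall x, ~ clos_trans nat E x x.

(* Main.v *)
Require Import Defs.
From Stdlib Require Import Relations ClassicalEpsilon.
From Stdlib Require List.
From mathcomp Require Import all_boot.
From mathcomp Require Import zify.

Lemma maxmem (s : seq nat) : s != [::] -> \max_(k <- s) k \in s.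
Proof.
elim: s => // a s IH _; rewrite big_cons inE.
case: s IH => [|b s] IH; first by rewrite big_nil maxn0 eqxx.
have := IH isT; set M := \max_(k <- _) k => HM.
rewrite /maxn; case: ltnP => _; by rewrite ?eqxx ?HM ?orbT.
Qed.

Lemma maxub (s : seq nat) x : x \in s -> x <= \max_(k <- s) k.
Proof. by move=> h; apply: (@leq_bigmax_seq _ s xpredT id x h). Qed.

Definition RFs (sig : seq event) (u : nat) : Prop :=
 (data (at_ sig u) = 0 /\ forall k, 1 <= k <= u -> is_write (at_ sig k) ->
     loc (at_ sig k) = loc (at_ sig u) -> False)
 \/ (exists k, 1 <= k <= u /\ is_write (at_ sig k) /\ loc (at_ sig k) = loc (at_ sig u) /\
       data (at_ sig u) = data (at_ sig k) /\
       forall k', 1 <= k' <= u -> is_write (at_ sig k') -> loc (at_ sig k') = loc (at_ sig u) -> k' <= k).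

Lemma mem_upto sig u k : (k \in upto sig u) =
  [&& 1 <= k <= u, is_write (at_ sig k) & loc (at_ sig k) == loc (at_ sig u)].
Proof. by rewrite /upto mem_filter mem_iota add1n ltnS andbC. Qed.

Lemma serialE sig : serial sig <-> forall u, pos sig u -> RFs sig u.
Proof.
split=> H u pu; have := H u pu; rewrite /RFs.
- case E: (upto sig u) => [|a s] hd.
  + left; split=> // k hk hw hl.
    have : k \in upto sig u by rewrite mem_upto hk hw hl eqxx.
    by rewrite E.
  + rewrite -E in hd; right; exists (\max_(k <- upto sig u) k).
    have := maxmem (upto sig u); rewrite E => /(_ isT); rewrite -E mem_upto.
    case/and3P=> h1 h2 /eqP h3; split=> //; split=> //; split=> //; split=> //.
    move=> k' hk hw hl; apply: maxub; by rewrite mem_upto hk hw hl eqxx.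
- case E: (upto sig u) => [|a s].
  + case=> [[]//|[k [hk [hw [hl [hd _]]]]]].
    have : k \in upto sig u by rewrite mem_upto hk hw hl eqxx.
    by rewrite E.
  + rewrite -E; case=> [[_ hn]|[k [hk [hw [hl [hd hm]]]]]].
    * have : a \in upto sig u by rewrite E inE eqxx.
      rewrite mem_upto => /and3P[h1 h2 /eqP h3]; case: (hn a h1 h2 h3).
    * have kin : k \in upto sig u by rewrite mem_upto hk hw hl eqxx.
      have := maxmem (upto sig u); rewrite E => /(_ isT); rewrite -E => Mi.
      have e1 := maxub _ _ kin.
      move: (Mi); rewrite mem_upto => /and3P[h1 h2 /eqP h3].
      have e2 := hm _ h1 h2 h3.
      have -> : \max_(k <- upto sig u) k = k by apply/eqP; rewrite eqn_leq e1 e2.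
      exact: hd.
Qed.

Definition RFt (tau : seq event) (f : nat -> nat) (y : nat) : Prop :=
 (data (at_ tau y) = 0 /\ forall x, pos tau x -> is_write (at_ tau x) ->
     loc (at_ tau x) = loc (at_ tau y) -> f x <= f y -> False)
 \/ (exists x, pos tau x /\ is_write (at_ tau x) /\ loc (at_ tau x) = loc (at_ tau y) /\
       data (at_ tau y) = data (at_ tau x) /\ f x <= f y /\
       forall x', pos tau x' -> is_write (at_ tau x') -> loc (at_ tau x') = loc (at_ tau y) ->
         f x' <= f y -> f x' <= f x).

Lemma at_sig tau g p : 1 <= p <= size tau ->
  at_ [seq at_ tau (g p) | p <- iota 1 (size tau)] p = at_ tau (g p).
Proof.
move=> hp; rewrite /at_ (nth_map 0) ?size_iota; last by lia.
by rewrite nth_iota; [congr (at_ tau (g _)); lia | lia].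
Qed.

Lemma transl tau f g : perm_N (size tau) f g ->
  (serial [seq at_ tau (g p) | p <- iota 1 (size tau)] <->
   forall y, pos tau y -> RFt tau f y).
Proof.
move=> [Hf Hg]; set sig := [seq _ | _ <- _].
have psig p : pos sig p <-> 1 <= p <= size tau.
  by rewrite /pos /sig size_map size_iota.
rewrite serialE; split=> H.
- move=> y py; have [fy gfy] := Hf y py.
  have := H (f y) (proj2 (psig _) fy); rewrite /RFs /RFt.
  rewrite at_sig // gfy.
  case=> [[hd hn]|[k [hk [hw [hl [hd hm]]]]]].
  + left; split=> // x px hw hl hle.
    have [fx gfx] := Hf x px.
    apply: (hn (f x)); first by lia.
    * by rewrite at_sig // gfx.
    * by rewrite at_sig // gfx.
  + have kN : 1 <= k <= size tau by lia.
    have [gk fgk] := Hg k kN.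
    move: hw hl hd; rewrite at_sig // => hw hl hd.
    right; exists (g k); rewrite fgk; split=> //; split=> //; split=> //; split=> //; split; first by lia.
    move=> x' px' hw' hl' hle.
    have [fx gfx] := Hf x' px'.
    apply: hm; first by lia.
    * by rewrite at_sig // gfx.
    * by rewrite at_sig // gfx.
- move=> u /psig pu; have [gu fgu] := Hg u pu.
  have := H (g u) gu; rewrite /RFs /RFt at_sig // fgu.
  case=> [[hd hn]|[x [px [hw [hl [hd [hle hm]]]]]]].
  + left; split=> // k hk; have kN : 1 <= k <= size tau by lia.
    have [gk fgk] := Hg k kN.
    rewrite at_sig // => hw hl; apply: (hn (g k)) => //; lia.
  + have [fx gfx] := Hf x px.
    right; exists (f x); rewrite at_sig // gfx; split; first by lia. split=> //; split=> //; split=> //.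
    move=> k' hk'; have kN : 1 <= k' <= size tau by lia.
    have [gk fgk] := Hg k' kN.
    rewrite at_sig // => hw' hl'.
    have := hm (g k') gk hw' hl'; rewrite fgk; apply; lia.
Qed.

Definition pb (P : Prop) : bool := if excluded_middle_informative P then true else false.
Lemma pbP P : reflect P (pb P).
Proof. by rewrite /pb; case: excluded_middle_informative => h; constructor. Qed.

Lemma in_trace (I : Type) (r : seq (event + I)) e : List.In e (trace r) -> List.In (inl e) r.
Proof.
elim: r => //= [[a|a] r IH] /=.
- by rewrite /trace /=; case=> [->|h]; [left|right; apply: IH].
- by rewrite /trace /= => h; right; apply: IH.
Qed.

Lemma at_In tau u : pos tau u -> List.In (at_ tau u) tau.
Proof.
rewrite /pos /at_ => hp; have : u.-1 < size tau by lia.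
move: (u.-1) => k hu; clear hp.
elim: tau k hu => //= a tau IH [|k] hu /=; [by left | right; exact: IH].
Qed.

Lemma evE S n m v tau u : trace_of S n m v tau -> pos tau u -> in_E n m v (at_ tau u).
Proof.
move=> [r [hr <-]] hp; apply: (runs_events hr); apply: in_trace; exact: at_In.
Qed.

Lemma writeW e : is_write e -> op e = W.
Proof. by case: e => [[]]. Qed.
Lemma Wwrite e : op e = W -> is_write e.
Proof. by case: e => [[]]. Qed.

Lemma count_lt (s : seq nat) (p1 p2 : pred nat) z :
  (forall x, p1 x -> p2 x) -> z \in s -> p2 z -> ~~ p1 z -> count p1 s < count p2 s.
Proof.
move=> sub; elim: s => // a s IH; rewrite inE => /orP[/eqP<-|zs] h2 h1 /=.
- rewrite h2 (negbTE h1) add0n add1n ltnS; exact: sub_count.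
- have := IH zs h2 h1; case: (p1 a) (sub a) => [->//|_]; case: (p2 a) => /=; lia.
Qed.

Lemma topo N (E : nat -> nat -> Prop) :
  (forall x y, E x y -> 1 <= x <= N /\ 1 <= y <= N) ->
  (forall x, ~ clos_trans nat E x x) ->
  exists f g, perm_N N f g /\ forall x y, E x y -> f x < f y.
Proof.
move=> HE Hac.
pose key u := count (fun w => pb (clos_trans nat E w u)) (iota 1 N).
have keylt x y : E x y -> key x < key y.
  move=> hxy; apply: (count_lt _ _ _ x).
  - move=> w /pbP h; apply/pbP; apply: t_trans h _; exact: t_step.
  - rewrite mem_iota; have := HE _ _ hxy; lia.
  - by apply/pbP; apply: t_step.
  - by apply/pbP; apply: Hac.
pose leT := fun a b => key a <= key b.
pose l := sort leT (iota 1 N).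
have lperm : perm_eq l (iota 1 N) by rewrite perm_sort perm_refl.
have lu : uniq l by rewrite (perm_uniq lperm) iota_uniq.
have lsz : size l = N by rewrite (perm_size lperm) size_iota.
have lmem x : (x \in l) = (1 <= x <= N).
  by rewrite (perm_mem lperm) mem_iota; apply/idP/idP; lia.
have lsorted : sorted leT l.
  apply: sort_sorted => a b; rewrite /leT; lia.
exists (fun u => (index u l).+1), (fun p => nth 0 l p.-1); split; first split.
- move=> u hu; have ul : u \in l by rewrite lmem.
  split; last by rewrite /= nth_index.
  by have := ul; rewrite -index_mem lsz; lia.
- move=> p hp; have hl : p.-1 < size l by rewrite lsz; lia.
  have := mem_nth 0 hl; rewrite lmem => h; split=> //.
  rewrite index_uniq //; lia.
- move=> x y hxy; have := keylt _ _ hxy.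
  have [hx hy] := HE _ _ hxy.
  have xl : x \in l by rewrite lmem.
  have yl : y \in l by rewrite lmem.
  case: (ltngtP (index x l) (index y l)) => // h.
  + have tr : transitive leT by move=> a b c; rewrite /leT; lia.
    have := sorted_ltn_index tr lsorted y x yl xl h; rewrite /leT; lia.
  + have := @index_inj _ _ l x y xl yl h => hh; rewrite hh; idtac.
    by rewrite ltnn.
Unshelve. all: exact 0.
Qed.
Arguments evE {S n m v tau u}.
Arguments writeW {e}.
Arguments Wwrite {e}.
Arguments topo N E : clear implicits.

Lemma dir2 (S : memsys) (hC : causality S) (n m v : nat)
  (hn : 1 <= n) (hm : 1 <= m) (hv : 1 <= v) Omega
  (Hw : witness S n m v Omega)
  (Hac : forall tau, trace_of S n m v tau -> unambiguous tau ->
       acyclic (Gedge n m Omega tau))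
  tau (Htr : trace_of S n m v tau) (Hu : unambiguous tau) : seq_consistent tau.
Proof.
have HE : forall x y, Gedge n m Omega tau x y -> 1 <= x <= size tau /\ 1 <= y <= size tau.
  by move=> x y [px [py _]].
have [f [g [Hp Hmono]]] := topo (size tau) _ HE (Hac tau Htr Hu).
exists f, g; split=> //; split.
- move=> i u w hM; apply: Hmono.
  have [[pu pi] [[pw _] _]] := hM.
  split=> //; split=> //; left; exists i; split=> //.
  have [hi _] := evE Htr pu; by rewrite -pi.
- apply (proj2 (transl tau f g Hp)) => y py.
  set j := loc (at_ tau y).
  have [_ [hj _]] := evE Htr py.
  have wnz x : pos tau x -> is_write (at_ tau x) -> data (at_ tau x) <> 0.
    move=> px hw; exact: (proj1 (Hu (loc (at_ tau x)) x (conj (conj px erefl) (writeW hw)))).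
  have edge x y' : Gedge n m Omega tau x y' -> f x < f y' by apply: Hmono.
  case Hop: (op (at_ tau y)).
  +
    have := hC n m v hn hm hv tau Htr j y (conj (conj py erefl) Hop).
    case=> [h0|[w [[[pw lw] ow] hd]]].
    * left; split=> // x px hw hl hle.
      have : f y < f x.
        apply: edge; split=> //; split=> //; right; exists j; split=> //.
        split; first by split. split; first by split.
        right; left; split=> //; exact: wnz.
      lia.
    * right; exists w; split=> //; split; first exact: Wwrite.
      split=> //; split=> //.
      have fwy : f w < f y.
        apply: edge; split=> //; split=> //; right; exists j; split=> //.
        split; first by split. split; first by split.
        by left.
      split; first lia.
      move=> x' px' hw' hl' hle.
      case: (eqVneq x' w) => [->//|ne].
      have [_ [_ [_ tot]]] := Hw tau Htr j hj.
      have Lw' : Lw tau j x' by split; [split|exact: writeW].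
      have Lww : Lw tau j w by split; [split|].
      case: (tot w x' Lww Lw' (fun e => (negP ne) (introT eqP (esym e)))) => ho.
      - have : f y < f x'.
          apply: edge; split=> //; split=> //; right; exists j; split=> //.
          split; first by split. split; first by split.
          by right; right; exists w, x'.
        lia.
      - have : f x' < f w.
          apply: edge; split=> //; split=> //; right; exists j; split=> //.
          split; first by split. split; first by split.
          by right; right; exists x', w.
        lia.
  + right; exists y; split=> //; split; first exact: Wwrite.
    by do 3 (split=> //).
Qed.

Definition SCf tau f := exists g, perm_N (size tau) f g /\
    (forall i u w, Mrel tau i u w -> f u < f w) /\
    serial [seq at_ tau (g p) | p <- iota 1 (size tau)].

Definition cf tau : nat -> nat :=
  match excluded_middle_informative (exists f, SCf tau f) with
  | left h => proj1_sig (constructive_indefinite_description _ h)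
  | right _ => id end.

Lemma cf_spec tau : seq_consistent tau -> SCf tau (cf tau).
Proof.
move=> h; rewrite /cf; case: excluded_middle_informative => [h'|h']; last by case: h'.
exact: proj2_sig (constructive_indefinite_description _ h').
Qed.

Lemma cf_inj tau x y : pos tau x -> pos tau y -> cf tau x = cf tau y -> x = y.
Proof.
rewrite /cf; case: excluded_middle_informative => [h'|h'] //.
case: (constructive_indefinite_description _ h') => f [g [[Hf _] _]] /= px py e.
by rewrite -(proj2 (Hf x px)) -(proj2 (Hf y py)) e.
Qed.

Definition Om tau j a b := Lw tau j a /\ Lw tau j b /\ cf tau a < cf tau b.

Lemma dir1 (S : memsys) (n m v : nat)
  (H : forall tau, trace_of S n m v tau -> unambiguous tau -> seq_consistent tau) :
  exists Omega, witness S n m v Omega /\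
     forall tau, trace_of S n m v tau -> unambiguous tau ->
       acyclic (Gedge n m Omega tau).
Proof.
exists Om; split.
- move=> tau _ j _; split; first by move=> x y [h1 [h2 _]].
  split; first by move=> x [_ [_ h]]; lia.
  split; first by move=> x y z [h1 [_ h2]] [_ [h3 h4]]; split=> //; split=> //; lia.
  move=> x y hx hy ne; rewrite /Om.
  have : cf tau x <> cf tau y by move=> e; apply: ne; apply: (cf_inj _ _ _ (proj1 (proj1 hx)) (proj1 (proj1 hy)) e).
  case: (ltngtP (cf tau x) (cf tau y)) => h e; [left|right|]; by [|lia].
- move=> tau Htr Hu.
  have [g [Hp [HM Hs]]] := cf_spec tau (H tau Htr Hu).
  set f := cf tau.
  have RF := proj1 (transl tau f g Hp) Hs.
  have wnz x : pos tau x -> is_write (at_ tau x) -> data (at_ tau x) <> 0.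
    move=> px hw; exact: (proj1 (Hu (loc (at_ tau x)) x (conj (conj px erefl) (writeW hw)))).
  have wuniq x x' : pos tau x -> pos tau x' -> is_write (at_ tau x) -> is_write (at_ tau x') ->
      loc (at_ tau x) = loc (at_ tau x') -> data (at_ tau x) = data (at_ tau x') -> x = x'.
    move=> px px' hw hw' hl hd; case: (eqVneq x x') => [//|ne].
    have := proj2 (Hu (loc (at_ tau x)) x (conj (conj px erefl) (writeW hw))) x'
      (conj (conj px' (esym hl)) (writeW hw')) (fun e => (negP ne) (introT eqP (esym e))).
    by [].
  have edge x y : Gedge n m Om tau x y -> f x < f y.
    move=> [px [py [[i [_ hM]]|[j [hj [[_ lx] [[_ ly] hc]]]]]]]; first exact: HM hM.
    case: hc => [[hd [ox oy]]|[[hx hy]|[a [b [[[pa la] oa] [[[pb lb] ob] [[_ [_ hab]] [hda hdb]]]]]]]].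
    + case: (RF y py) => [[h0 _]|[k [pk [hk [lk [hdk [hle _]]]]]]].
      * by case: (wnz x px (Wwrite ox)); rewrite hd.
      * have kx : k = x.
          apply: wuniq => //; [exact: Wwrite ox|by rewrite lk ly lx|by rewrite -hdk hd].
        subst k.
        have : f x <> f y by move=> e; have := cf_inj _ _ _ px py e => exy; rewrite exy oy in ox.
        lia.
    + case: (RF x px) => [[_ hn]|[k [pk [hk [lk [hdk _]]]]]]; last first.
        by case: (wnz k pk hk); rewrite -hdk.
      case: (RF y py) => [[h0 _]//|[k [pk [hk [lk [hdk [hle _]]]]]]].
      have : ~ f k <= f x by apply: hn => //; rewrite lk ly lx.
      lia.
    + case: (RF x px) => [[h0 _]|[k [pk [hk [lk [hdk [hle hmx]]]]]]].
        by case: (wnz a pa (Wwrite oa)); rewrite hda.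
      have ka : k = a by apply: wuniq => //; [exact: Wwrite oa|by rewrite lk lx la|by rewrite -hdk hda].
      subst k.
      case: (RF y py) => [[h0 _]|[k [pk' [hk' [lk' [hdk' [hle' _]]]]]]].
        by case: (wnz b pb (Wwrite ob)); rewrite hdb.
      have kb : k = b by apply: wuniq => //; [exact: Wwrite ob|by rewrite lk' ly lb|by rewrite -hdk' hdb].
      subst k.
      case: (leqP (f y) (f x)) => // hyx.
      have : f b <= f a by apply: (hmx b pb (Wwrite ob)); [by rewrite lb lx|lia].
      rewrite /f in hle' hyx *; lia.
  have ct x y : clos_trans nat (Gedge n m Om tau) x y -> f x < f y.
    elim=> [a b /edge //|a b c _ h1 _ h2]; lia.
  move=> x /ct; lia.
Qed.

Theorem theorem5p3 (S : memsys) (hC : causality S) (n m v : nat)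
  (hn : 1 <= n) (hm : 1 <= m) (hv : 1 <= v) :
  (forall tau, trace_of S n m v tau -> unambiguous tau -> seq_consistent tau) <->
  (exists Omega, witness S n m v Omega /\
     forall tau, trace_of S n m v tau -> unambiguous tau ->
       acyclic (Gedge n m Omega tau)).
Proof.
split; first exact: dir1.
move=> [Omega [Hw Hac]] tau Htr Hu; exact: (dir2 _ hC _ _ _ hn hm hv _ Hw Hac _ Htr Hu).
Qed.
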